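(* Let $H$ be a bialgebra over a commutative ring $\Bbbk$ and $A$ a right $H$-comodule algebra, with coaction $a\mapsto a^{(1)}\otimes a^{(2)}\in A\otimes H$. Then the maps $\Phi:(H^{\otimes n})^\vee\to\mathrm{Hom}_\Bbbk(A^{\otimes n},A)$ sending $f:H^{\otimes n}\to\Bbbk$ to $F(a_1\otimes\dots\otimes a_n)=a_1^{(1)}\cdots a_n^{(1)}f(a_1^{(2)}\otimes\dots\otimes a_n^{(2)})$ define a morphism of linear operads with multiplication from the operad $\mathcal{O}^H$ (whose cochain complex is $B(H)^\vee$) to the endomorphism operad $\mathcal{E}nd(A)$. In particular $\Phi$ induces a morphism of Gerstenhaber algebras $H^*(\Phi):\mathrm{Ext}^*_H(\Bbbk,\Bbbk)\to HH^*(A,A)$.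
   Context: A right $H$-comodule algebra is an algebra $A$ with a right $H$-coaction that is an algebra morphism $A\to A\otimes H$. $\mathcal{O}^H(n)=\mathrm{Hom}(H^{\otimes n},\Bbbk)$ with $(f\circ_ig)(a_1\otimes\dots\otimes a_{m+n-1})=f(a_1\otimes\dots\otimes a_{i-1}\otimes a_i^{(1)}\cdots a_{i+n-1}^{(1)}g(a_i^{(2)}\otimes\dots\otimes a_{i+n-1}^{(2)})\otimes a_{i+n}\otimes\dots\otimes a_{m+n-1})$ (coproduct $\Delta a=a^{(1)}\otimes a^{(2)}$ in $H$), identity $\varepsilon$, multiplication $\varepsilon\circ\mu_H$, $e=\mathrm{id}_\Bbbk$. $\mathcal{E}nd(A)(n)=\mathrm{Hom}(A^{\otimes n},A)$ with $\gamma(f;g_1,\dots,g_n)=f\circ(g_1\otimes\dots\otimes g_n)$, identity $\mathrm{id}_A$, multiplication the product of $A$, $e$ the unit. For an operad with multiplication, cohomology of the cochain complex ($df=\mu\circ_2f+\sum_i(-1)^if\circ_i\mu+(-1)^{n+1}\mu\circ_1f$) is a Gerstenhaber algebra with cup product $(\mu\circ_1f)\circ_{m+1}g$ and bracket $\{f,g\}=f\bar\circ g-(-1)^{(m-1)(n-1)}g\bar\circ f$, $f\bar\circ g=(-1)^{(m-1)(n-1)}\sum_i(-1)^{(n-1)(i-1)}f\circ_ig$; for $\mathcal{O}^H$ this gives $\mathrm{Ext}^*_H(\Bbbk,\Bbbk)$ and for $\mathcal{E}nd(A)$ it gives $HH^*(A,A)$. *)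

(* Defs.v *)
From HB Require Import structures.
From mathcomp Require Import all_boot all_order all_algebra.
Set Implicit Arguments.
Unset Strict Implicit.
Unset Printing Implicit Defensive.
Import Order.TTheory GRing.Theory Num.Theory.
Local Open Scope ring_scope.

(* Tensor products.  An element of M (x) N is encoded by a finite formal sum *)
(* of pure tensors (a list of pairs); two such lists denote the same tensor *)
(* iff they have the same image under every bilinear map to every module    *)
(* (this is exactly equality in the tensor product M (x)_k N).              *)

Section Tensors.
Variable R : comPzRingType.

Definition bilin (M N P : lmodType R) (b : M -> N -> P) : Prop :=
  (forall r x x' y, b (r *: x + x') y = r *: b x y + b x' y) /\
  (forall r x y y', b x (r *: y + y') = r *: b x y + b x y').

Definition trilin (M N Q P : lmodType R) (t : M -> N -> Q -> P) : Prop :=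
  [/\ (forall r x x' y z, t (r *: x + x') y z = r *: t x y z + t x' y z),
      (forall r x y y' z, t x (r *: y + y') z = r *: t x y z + t x y' z)
    & (forall r x y z z', t x y (r *: z + z') = r *: t x y z + t x y z')].

Definition teq2 (M N : lmodType R) (s t : seq (M * N)) : Prop :=
  forall (P : lmodType R) (b : M -> N -> P), bilin b ->
    \sum_(x <- s) b x.1 x.2 = \sum_(x <- t) b x.1 x.2.

Definition teq3 (M N Q : lmodType R) (s t : seq (M * N * Q)) : Prop :=
  forall (P : lmodType R) (b : M -> N -> Q -> P), trilin b ->
    \sum_(x <- s) b x.1.1 x.1.2 x.2 = \sum_(x <- t) b x.1.1 x.1.2 x.2.

Record is_bialgebra (H : algType R) (Delta : H -> seq (H * H)) (eps : H -> R)
  : Prop := {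
  Delta_lin : forall r a b, teq2 (Delta (r *: a + b))
                 ([seq (r *: x.1, x.2) | x <- Delta a] ++ Delta b);
  Delta_coassoc : forall a,
    teq3 (flatten [seq [seq (y.1, y.2, x.2) | y <- Delta x.1] | x <- Delta a])
         (flatten [seq [seq (x.1, z.1, z.2) | z <- Delta x.2] | x <- Delta a]);
  counit_l : forall a, \sum_(x <- Delta a) eps x.1 *: x.2 = a;
  counit_r : forall a, \sum_(x <- Delta a) eps x.2 *: x.1 = a;
  Delta_mul : forall a b, teq2 (Delta (a * b))
                 [seq (x.1 * y.1, x.2 * y.2) | x <- Delta a, y <- Delta b];
  Delta_one : teq2 (Delta 1) [:: (1, 1)];
  eps_lin : forall r a b, eps (r *: a + b) = r * eps a + eps b;
  eps_mul : forall a b, eps (a * b) = eps a * eps b;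
  eps_one : eps 1 = 1 }.

Record is_comodule_algebra (H A : algType R) (Delta : H -> seq (H * H))
  (eps : H -> R) (rho : A -> seq (A * H)) : Prop := {
  rho_lin : forall r a b, teq2 (rho (r *: a + b))
                 ([seq (r *: x.1, x.2) | x <- rho a] ++ rho b);
  rho_coassoc : forall a,
    teq3 (flatten [seq [seq (y.1, y.2, x.2) | y <- rho x.1] | x <- rho a])
         (flatten [seq [seq (x.1, z.1, z.2) | z <- Delta x.2] | x <- rho a]);
  rho_counit : forall a, \sum_(x <- rho a) eps x.2 *: x.1 = a;
  rho_mul : forall a b, teq2 (rho (a * b))
                 [seq (x.1 * y.1, x.2 * y.2) | x <- rho a, y <- rho b];
  rho_one : teq2 (rho 1) [:: (1, 1)] }.

End Tensors.

(* n-ary cochains.  Hom(M^{(x) n}, V) is represented by maps seq M -> V     *)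
(* that are multilinear on lists of length n (values on other lengths are   *)
(* irrelevant; all equalities below are only asserted on lists of the right *)
(* length).                                                                 *)

Definition multilin (R : comPzRingType) (M V : lmodType R) (n : nat)
  (f : seq M -> V) : Prop :=
  forall (l1 l2 : seq M) r x y, (size l1 + (size l2).+1)%N = n ->
    f (l1 ++ (r *: x + y) :: l2) = r *: f (l1 ++ x :: l2) + f (l1 ++ y :: l2).

Fixpoint prodseq (T : Type) (ss : seq (seq T)) : seq (seq T) :=
  match ss with
  | [::] => [:: [::]]
  | s :: ss' => [seq x :: c | x <- s, c <- prodseq ss']
  end.

(* Sweedler expression  l_1^(1) ... l_k^(1) g(l_1^(2) (x) ... (x) l_k^(2))   *)
(* where delta x = x^(1) (x) x^(2).                                          *)
Definition sweed (R : comPzRingType) (X : Type) (Y : algType R) (Z : Type)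
  (delta : X -> seq (Y * Z)) (g : seq Z -> R) (l : seq X) : Y :=
  \sum_(c <- prodseq (map delta l)) g (map snd c) *: \prod_(x <- c) x.1.

(* replace the block of n entries starting at position i (1-based) by x *)
Definition ins (X : Type) (l : seq X) (i n : nat) (x : X) : seq X :=
  take i.-1 l ++ x :: drop (i.-1 + n) l.
Definition blk (X : Type) (l : seq X) (i n : nat) : seq X :=
  take n (drop i.-1 l).

Definition ocomp (R : comPzRingType) (H : algType R) (Delta : H -> seq (H * H))
  (f g : seq H -> R) (i n : nat) : seq H -> R :=
  fun l => f (ins l i n (sweed Delta g (blk l i n))).
Definition oid (R : comPzRingType) (H : algType R) (eps : H -> R) : seq H -> R :=
  fun l => eps (nth 0 l 0).
Definition omul (R : comPzRingType) (H : algType R) (eps : H -> R) : seq H -> R :=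
  fun l => eps (nth 0 l 0 * nth 0 l 1).
Definition oe (R : comPzRingType) (H : algType R) : seq H -> R := fun _ => 1.

Definition ecomp (R : comPzRingType) (A : algType R) (F G : seq A -> A) (i n : nat)
  : seq A -> A :=
  fun l => F (ins l i n (G (blk l i n))).
Definition eid (R : comPzRingType) (A : algType R) : seq A -> A :=
  fun l => nth 0 l 0.
Definition emul (R : comPzRingType) (A : algType R) : seq A -> A :=
  fun l => nth 0 l 0 * nth 0 l 1.
Definition ee (R : comPzRingType) (A : algType R) : seq A -> A := fun _ => 1.

Definition Phi (R : comPzRingType) (H A : algType R) (rho : A -> seq (A * H))
  (f : seq H -> R) : seq A -> A := sweed rho f.

(* Generic cochain operations for an operad with multiplication, given its *)
(* partial compositions comp f g i n (g of arity n) and multiplication mu.  *)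
Definition sgn (V : zmodType) (b : bool) (x : V) : V := if b then - x else x.

Section CochainOps.
Variables (X : Type) (V : zmodType).
Variable comp : (seq X -> V) -> (seq X -> V) -> nat -> nat -> seq X -> V.
Variable mu : seq X -> V.

Definition odiff (n : nat) (f : seq X -> V) : seq X -> V :=
  fun l => comp mu f 2 n l
           + \sum_(1 <= i < n.+1) sgn (odd i) (comp f mu i 2 l)
           + sgn (odd n.+1) (comp mu f 1 n l).

Definition ocup (m n : nat) (f g : seq X -> V) : seq X -> V :=
  comp (comp mu f 1 m) g m.+1 n.

(* f bar-o g = (-1)^{(m-1)(n-1)} sum_{i=1}^m (-1)^{(n-1)(i-1)} f o_i g;
   (-1)^{(m-1)(n-1)} = -1 iff m and n are both even (integer arithmetic) *)
Definition opre (m n : nat) (f g : seq X -> V) : seq X -> V :=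
  fun l => sgn (~~ odd m && ~~ odd n)
             (\sum_(1 <= i < m.+1) sgn (~~ odd n && ~~ odd i) (comp f g i n l)).

Definition obracket (m n : nat) (f g : seq X -> V) : seq X -> V :=
  fun l => opre m n f g l - sgn (~~ odd m && ~~ odd n) (opre n m g f l).
End CochainOps.

Definition multilinR (R : comPzRingType) (M : lmodType R) (n : nat)
  (f : seq M -> R) : Prop := @multilin R M R^o n f.

(* Main.v *)
Require Import Defs.
From HB Require Import structures.
From mathcomp Require Import all_boot all_order all_algebra zify.
Import GRing.Theory.
Local Open Scope ring_scope.

Lemma sum_prodseq_cons (V : nmodType) (T : Type) (s : seq T) (ss : seq (seq T))
  (F : seq T -> V) :
  \sum_(c <- prodseq (s :: ss)) F c = \sum_(x <- s) \sum_(c <- prodseq ss) F (x :: c).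
Proof. by rewrite /= big_allpairs_dep. Qed.

Lemma sum_prodseq_nil (V : nmodType) (T : Type) (F : seq T -> V) :
  \sum_(c <- prodseq [::]) F c = F [::].
Proof. by rewrite /= big_seq1. Qed.

Lemma sum_prodseq_cat (V : nmodType) (T : Type) (s1 s2 : seq (seq T))
  (F : seq T -> V) :
  \sum_(c <- prodseq (s1 ++ s2)) F c
  = \sum_(c1 <- prodseq s1) \sum_(c2 <- prodseq s2) F (c1 ++ c2).
Proof.
elim: s1 F => [|s s1 IH] F; first by rewrite sum_prodseq_nil.
rewrite cat_cons !sum_prodseq_cons; apply: eq_bigr => x _.
by rewrite IH.
Qed.

Lemma eq_prodseq_size (V : nmodType) (T : Type) (ss : seq (seq T))
  (F G : seq T -> V) :
  (forall c, size c = size ss -> F c = G c) ->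
  \sum_(c <- prodseq ss) F c = \sum_(c <- prodseq ss) G c.
Proof.
elim: ss F G => [|s ss IH] F G hFG; first by rewrite !sum_prodseq_nil hFG.
rewrite !sum_prodseq_cons; apply: eq_bigr => x _; apply: IH => c hc.
by apply: hFG; rewrite /= hc.
Qed.

Lemma sum_prodseq_nest (V : nmodType) (X Z : Type) (fam : seq (seq X))
  (K : X -> seq Z) (P : seq Z -> V) :
  \sum_(c <- prodseq fam) \sum_(t <- prodseq (map K c)) P t
  = \sum_(t <- prodseq (map (fun s => flatten (map K s)) fam)) P t.
Proof.
elim: fam P => [|s fam IH] P; first by rewrite /= !big_seq1.
rewrite !sum_prodseq_cons big_flatten big_map; apply: eq_bigr => x _.
under [in RHS]eq_bigr => z _ do rewrite -(IH (fun t => P (z :: t))).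
under [in LHS]eq_bigr => c _ do rewrite (@sum_prodseq_cons _ _ (K x) (map K c)).
exact: exchange_big.
Qed.

Section Bil.
Context {R : comPzRingType} {M N P : lmodType R} {b : M -> N -> P} (hb : bilin b).

Lemma bil0l y : b 0 y = 0.
Proof.
have E := hb.1 1 0 0 y; rewrite scaler0 addr0 scale1r in E.
by apply: (@addrI _ (b 0 y)); rewrite addr0 -E.
Qed.
Lemma bil0r x : b x 0 = 0.
Proof.
have E := hb.2 1 x 0 0; rewrite scaler0 addr0 scale1r in E.
by apply: (@addrI _ (b x 0)); rewrite addr0 -E.
Qed.
Lemma bilZl r x y : b (r *: x) y = r *: b x y.
Proof. by have := hb.1 r x 0 y; rewrite addr0 bil0l addr0. Qed.
Lemma bilZr r x y : b x (r *: y) = r *: b x y.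
Proof. by have := hb.2 r x y 0; rewrite addr0 bil0r addr0. Qed.
Lemma bilDl x x' y : b (x + x') y = b x y + b x' y.
Proof. by have := hb.1 1 x x' y; rewrite !scale1r. Qed.
Lemma bilDr x y y' : b x (y + y') = b x y + b x y'.
Proof. by have := hb.2 1 x y y'; rewrite !scale1r. Qed.
Lemma bil_sumr (I : Type) (s : seq I) (r : I -> R) x (y : I -> N) :
  b x (\sum_(i <- s) r i *: y i) = \sum_(i <- s) r i *: b x (y i).
Proof.
elim: s => [|i s IH]; first by rewrite !big_nil bil0r.
by rewrite !big_cons bilDr bilZr IH.
Qed.
Lemma bil_suml (I : Type) (s : seq I) (r : I -> R) (x : I -> M) y :
  b (\sum_(i <- s) r i *: x i) y = \sum_(i <- s) r i *: b (x i) y.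
Proof.
elim: s => [|i s IH]; first by rewrite !big_nil bil0l.
by rewrite !big_cons bilDl bilZl IH.
Qed.
End Bil.

Lemma teq3_prod (R : comPzRingType) (M N Q P : lmodType R) (I : Type)
  (L1 L2 : I -> seq (M * N * Q)) (js : seq I) (Psi : seq (M * N * Q) -> P) :
  (forall i, teq3 (L1 i) (L2 i)) ->
  (forall pre post, (size pre + (size post).+1 = size js)%N ->
     trilin (fun a h k => Psi (pre ++ (a, h, k) :: post))) ->
  \sum_(t <- prodseq (map L1 js)) Psi t = \sum_(t <- prodseq (map L2 js)) Psi t.
Proof.
elim: js Psi => [|j js IH] Psi hL hPsi; first by [].
rewrite (@sum_prodseq_cons _ _ (L1 j) (map L1 js))
        (@sum_prodseq_cons _ _ (L2 j) (map L2 js)).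
transitivity (\sum_(x <- L1 j) \sum_(c <- prodseq (map L2 js)) Psi (x :: c)).
  apply: eq_bigr => x _; apply: IH => // pre post hs.
  by apply: (hPsi (x :: pre) post); rewrite /= addSn hs.
pose b := fun a h k => \sum_(c <- prodseq (map L2 js)) Psi ((a, h, k) :: c).
have tb : trilin b.
  have hc0 : forall c : seq (M * N * Q), size c = size (map L2 js) ->
    (size (@nil (M * N * Q)) + (size c).+1 = size (j :: js))%N.
    by move=> c; rewrite size_map => hc; rewrite /= hc.
  split=> r *; rewrite /b scaler_sumr -big_split; apply: eq_prodseq_size => c hc /=;
    case: (hPsi [::] c (hc0 c hc)) => t1 t2 t3; first [exact: t1 | exact: t2 | exact: t3].
have E := hL j P b tb.
transitivity (\sum_(x <- L1 j) b x.1.1 x.1.2 x.2).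
  by apply: eq_bigr => [[[a h] k]] _.
rewrite E; by apply: eq_bigr => [[[a h] k]] _.
Qed.

Lemma sum_Krho (A H : Type) (rho : A -> seq (A * H)) (V : nmodType)
  (G : seq A -> seq H -> seq H -> V) (c : seq (A * H)) :
  \sum_(t <- prodseq (map (fun x => [seq (y.1, y.2, x.2) | y <- rho x.1]) c))
     G (map (fun y => y.1.1) t) (map (fun y => y.1.2) t) (map snd t)
  = \sum_(e <- prodseq (map rho (map fst c))) G (map fst e) (map snd e) (map snd c).
Proof.
elim: c G => [|x c IH] G; first by rewrite /= !big_seq1.
rewrite (@sum_prodseq_cons _ _ _ (map _ c)) (@sum_prodseq_cons _ _ (rho x.1)) big_map.
apply: eq_bigr => y _.
exact: (IH (fun s1 s2 s3 => G (y.1 :: s1) (y.2 :: s2) (x.2 :: s3))).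
Qed.

Lemma sum_KDelta (A H : Type) (Delta : H -> seq (H * H)) (V : nmodType)
  (G : seq A -> seq H -> seq H -> V) (c : seq (A * H)) :
  \sum_(t <- prodseq (map (fun x => [seq (x.1, z.1, z.2) | z <- Delta x.2]) c))
     G (map (fun y => y.1.1) t) (map (fun y => y.1.2) t) (map snd t)
  = \sum_(e <- prodseq (map Delta (map snd c))) G (map fst c) (map fst e) (map snd e).
Proof.
elim: c G => [|x c IH] G; first by rewrite /= !big_seq1.
rewrite (@sum_prodseq_cons _ _ _ (map _ c)) (@sum_prodseq_cons _ _ (Delta x.2)) big_map.
apply: eq_bigr => y _.
exact: (IH (fun s1 s2 s3 => G (x.1 :: s1) (y.1 :: s2) (y.2 :: s3))).
Qed.

Lemma rho_prod {R : comPzRingType} {H A : algType R} {Delta : H -> seq (H * H)}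
  {eps : H -> R} {rho : A -> seq (A * H)} :
  is_comodule_algebra Delta eps rho ->
  forall (P : lmodType R) (b : A -> H -> P) (as_ : seq A), bilin b ->
  \sum_(d <- rho (\prod_(a <- as_) a)) b d.1 d.2
  = \sum_(e <- prodseq (map rho as_)) b (\prod_(x <- e) x.1) (\prod_(x <- e) x.2).
Proof.
move=> hA P b as_; elim: as_ b => [|a as_ IH] b hb.
  by rewrite big_nil sum_prodseq_nil !big_nil (rho_one hA hb) big_seq1.
rewrite big_cons (rho_mul hA _ _ hb) big_allpairs_dep
  (@sum_prodseq_cons _ _ (rho a) (map rho as_)).
apply: eq_bigr => x _.
have hb' : bilin (fun a' h' => b (x.1 * a') (x.2 * h')).
  split=> r u u' v; rewrite mulrDr -scalerAr; [exact: hb.1 | exact: hb.2].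
rewrite (IH _ hb'); apply: eq_bigr => e _; by rewrite !big_cons.
Qed.

Lemma rho_sum {R : comPzRingType} {H A : algType R} {Delta : H -> seq (H * H)}
  {eps : H -> R} {rho : A -> seq (A * H)} :
  is_comodule_algebra Delta eps rho ->
  forall (P : lmodType R) (b : A -> H -> P), bilin b ->
  forall (I : Type) (s : seq I) (r : I -> R) (a : I -> A),
  \sum_(d <- rho (\sum_(i <- s) r i *: a i)) b d.1 d.2
  = \sum_(i <- s) r i *: \sum_(d <- rho (a i)) b d.1 d.2.
Proof.
move=> hA P b hb.
have rhoL : forall r x x', \sum_(d <- rho (r *: x + x')) b d.1 d.2
    = r *: \sum_(d <- rho x) b d.1 d.2 + \sum_(d <- rho x') b d.1 d.2.
  move=> r x x'; rewrite (rho_lin hA r x x' hb) big_cat big_map scaler_sumr.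
  by congr (_ + _); apply: eq_bigr => d _; rewrite (bilZl hb).
have rho0 : \sum_(d <- rho 0) b d.1 d.2 = 0.
  have E := rhoL 1 0 0; rewrite scaler0 addr0 scale1r in E.
  by apply: (@addrI _ (\sum_(d <- rho 0) b d.1 d.2)); rewrite addr0 -E.
move=> I s r a; elim: s => [|i s IH]; first by rewrite !big_nil rho0.
by rewrite !big_cons rhoL IH.
Qed.

Lemma lin_uav (R : comPzRingType) (A : algType R) (u v : A) r (a a' : A) :
  u * ((r *: a + a') * v) = r *: (u * (a * v)) + u * (a' * v).
Proof. by rewrite mulrDl mulrDr -scalerAl -scalerAr. Qed.

Lemma middle {R : comPzRingType} {H A : algType R} {Delta : H -> seq (H * H)}
  {eps : H -> R} {rho : A -> seq (A * H)} :
  is_comodule_algebra Delta eps rho ->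
  forall (f g : seq H -> R) (n : nat) (pre post : seq H) (P1 P2 : A) (M : seq A),
  multilinR n g -> size M = n ->
  (forall r x y, f (pre ++ (r *: x + y) :: post)
                 = r * f (pre ++ x :: post) + f (pre ++ y :: post)) ->
  \sum_(c <- prodseq (map rho M))
     f (pre ++ sweed Delta g (map snd c) :: post) *: (P1 * ((\prod_(x <- c) x.1) * P2))
  = \sum_(d <- rho (Phi rho g M)) f (pre ++ d.2 :: post) *: (P1 * (d.1 * P2)).
Proof.
move=> hA f g n pre post P1 P2 M hg hM hf.
pose b := fun (a : A) (h : H) => f (pre ++ h :: post) *: (P1 * (a * P2)).
have hb : bilin b.
  split=> r x x' y; rewrite /b.
    by rewrite lin_uav scalerDr !scalerA mulrC.
  by rewrite hf scalerDl scalerA.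
pose G := fun (s1 : seq A) (s2 s3 : seq H) =>
  g s3 *: b (\prod_(a <- s1) a) (\prod_(h <- s2) h).
pose K := fun x : A * H => [seq (y.1, y.2, x.2) | y <- rho x.1].
pose K' := fun x : A * H => [seq (x.1, z.1, z.2) | z <- Delta x.2].
pose Psi := fun t : seq (A * H * H) =>
  G (map (fun y => y.1.1) t) (map (fun y => y.1.2) t) (map snd t).
transitivity (\sum_(c <- prodseq (map rho M)) \sum_(t <- prodseq (map K' c)) Psi t).
  apply: eq_bigr => c _; rewrite /Psi sum_KDelta /G /sweed.
  rewrite (_ : \prod_(x <- c) x.1 = \prod_(a <- map fst c) a); last by rewrite big_map.
  rewrite -/(b _ _) (bil_sumr hb); apply: eq_bigr => e _.
  by congr (_ *: b _ _); rewrite big_map.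
transitivity (\sum_(c <- prodseq (map rho M)) \sum_(t <- prodseq (map K c)) Psi t);
  last first.
  rewrite /Phi /sweed (rho_sum hA _ _ hb); apply: eq_bigr => c _.
  rewrite /Psi sum_Krho /G -scaler_sumr.
  rewrite (_ : \prod_(x <- c) x.1 = \prod_(a <- map fst c) a); last by rewrite big_map.
  rewrite (rho_prod hA _ _ _ hb); congr (_ *: _); apply: eq_bigr => e _.
  by rewrite !big_map.
rewrite !sum_prodseq_nest -!map_comp.
apply: teq3_prod.
  by move=> m P bb hbb; rewrite (rho_coassoc hA m hbb).
move=> tp tq hs; rewrite hM in hs.
have hs' : (size (map snd tp) + (size (map snd tq)).+1 = n)%N by rewrite !size_map.
rewrite /Psi /G /b; split=> r x x' y z; rewrite !map_cat /= !big_cat !big_cons /=.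
- rewrite !lin_uav !scalerDr !scalerA; congr (_ *: _ + _).
  by rewrite mulrA mulrC.
- rewrite lin_uav hf scalerDl !scalerDr !scalerA; congr (_ *: _ + _).
  by rewrite mulrCA.
- have -> : g (map snd tp ++ (r *: y + z) :: map snd tq)
     = r * g (map snd tp ++ y :: map snd tq) + g (map snd tp ++ z :: map snd tq).
    exact: hg.
  by rewrite scalerDl !scalerA; congr (_ *: _ + _); exact: esym (mulrA _ _ _).
Qed.

Lemma Phi_comp {R : comPzRingType} {H A : algType R} {Delta : H -> seq (H * H)}
  {eps : H -> R} {rho : A -> seq (A * H)} :
  is_comodule_algebra Delta eps rho ->
  forall (f g : seq H -> R) (m n i : nat), multilinR n g -> (0 < i <= m)%N ->
  (forall pre post, size pre = i.-1 -> (size pre + (size post).+1 = m)%N ->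
     forall r x y, f (pre ++ (r *: x + y) :: post)
                   = r * f (pre ++ x :: post) + f (pre ++ y :: post)) ->
  forall l : seq A, size l = (m + n).-1 ->
  Phi rho (ocomp Delta f g i n) l = ecomp (Phi rho f) (Phi rho g) i n l.
Proof.
move=> hA f g m n i hg /andP[i0 im] hf l hl.
set L1 := take i.-1 l; set M := take n (drop i.-1 l); set L2 := drop (i.-1 + n) l.
have sL1 : size L1 = i.-1 by rewrite /L1 size_takel //; lia.
have sM : size M = n by rewrite /M size_takel // size_drop; lia.
have El : l = L1 ++ M ++ L2.
  by rewrite /L1 /M /L2 addnC -drop_drop !cat_take_drop.
rewrite /ecomp /ins /blk -/L1 -/M -/L2 /Phi /sweed.
rewrite [in LHS]El !map_cat map_cons !sum_prodseq_cat.
apply: eq_prodseq_size => c1; rewrite size_map sL1 => hc1.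
rewrite sum_prodseq_cat (@sum_prodseq_cons _ _ (rho _)) exchange_big [in RHS]exchange_big.
apply: eq_prodseq_size => c2 hc2.
transitivity (\sum_(cM <- prodseq (map rho M))
   f (map snd c1 ++ sweed Delta g (map snd cM) :: map snd c2)
     *: ((\prod_(x <- c1) x.1) * ((\prod_(x <- cM) x.1) * (\prod_(x <- c2) x.1)))).
  apply: eq_prodseq_size => cM; rewrite size_map sM => hcM.
  rewrite /ocomp /ins /blk !map_cat !big_cat.
  have s1 : size (map snd c1) = i.-1 by rewrite size_map.
  rewrite take_cat s1 ltnn subnn take0 cats0 drop_cat s1 ltnn subnn drop0 take_cat size_map hcM ltnn subnn take0 cats0.
  rewrite (_ : (i.-1 + n)%N = size (map snd c1 ++ map snd cM)); last by rewrite size_cat !size_map hc1 hcM.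
  by rewrite catA drop_size_cat.
transitivity (\sum_(d <- rho (Phi rho g M))
   f (map snd c1 ++ d.2 :: map snd c2)
     *: ((\prod_(x <- c1) x.1) * (d.1 * (\prod_(x <- c2) x.1)))); last first.
  by apply: eq_bigr => d _; rewrite map_cat big_cat big_cons.
apply: (middle hA f g n _ _ _ _ M hg sM).
apply: hf; first by rewrite size_map.
rewrite !size_map hc1; move: hc2; rewrite size_map /L2 size_drop => ->; lia.
Qed.

Section PhiLin.
Context {R : comPzRingType} {H A : algType R} (rho : A -> seq (A * H)).

Lemma Phi_add (F G : seq H -> R) l :
  Phi rho (fun h => F h + G h) l = Phi rho F l + Phi rho G l.
Proof.
by rewrite /Phi /sweed -big_split; apply: eq_bigr => c _; rewrite scalerDl.
Qed.
Lemma Phi_opp (F : seq H -> R) l : Phi rho (fun h => - F h) l = - Phi rho F l.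
Proof.
by rewrite /Phi /sweed -sumrN; apply: eq_bigr => c _; rewrite scaleNr.
Qed.
Lemma Phi_sgn b (F : seq H -> R) l :
  Phi rho (fun h => sgn b (F h)) l = sgn b (Phi rho F l).
Proof. by case: b => //=; rewrite Phi_opp. Qed.
Lemma Phi_sum (I : Type) (s : seq I) (P : pred I) (F : I -> seq H -> R) l :
  Phi rho (fun h => \sum_(i <- s | P i) F i h) l = \sum_(i <- s | P i) Phi rho (F i) l.
Proof.
rewrite /Phi /sweed; under eq_bigr do rewrite scaler_suml.
exact: exchange_big.
Qed.
End PhiLin.

Lemma size_ins (X : Type) (l : seq X) i n x : (0 < i)%N -> (i.-1 + n <= size l)%N ->
  size (ins l i n x) = (size l - n).+1.
Proof. move=> h1 h2; rewrite /ins size_cat /= size_drop size_takel; lia. Qed.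

Lemma size_blk (X : Type) (l : seq X) i n : (i.-1 + n <= size l)%N ->
  size (blk l i n) = n.
Proof. move=> h; rewrite /blk size_takel // size_drop; lia. Qed.

Lemma ml_lin {R : comPzRingType} {H : lmodType R} (f : seq H -> R) m k :
  multilinR m f -> forall pre post, size pre = k -> (size pre + (size post).+1 = m)%N ->
  forall r x y, f (pre ++ (r *: x + y) :: post) = r * f (pre ++ x :: post) + f (pre ++ y :: post).
Proof. by move=> hf pre post _ hs r x y; exact: hf. Qed.

Lemma omul_ml {R : comPzRingType} {H : algType R} {Delta : H -> seq (H * H)} {eps : H -> R} :
  is_bialgebra Delta eps -> multilinR 2 (omul eps).
Proof.
move=> hB l1 l2 r x y.
case: l1 => [|w [|? ?]]; case: l2 => [|z [|? ?]] => //= hs; try lia;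
  rewrite /omul /=.
  by rewrite mulrDl -scalerAl (eps_lin hB).
by rewrite mulrDr -scalerAr (eps_lin hB).
Qed.

Lemma Phi_omul {R : comPzRingType} {H A : algType R} {Delta : H -> seq (H * H)}
  {eps : H -> R} {rho : A -> seq (A * H)} :
  is_bialgebra Delta eps -> is_comodule_algebra Delta eps rho ->
  forall l : seq A, size l = 2 -> Phi rho (omul eps) l = emul l.
Proof.
move=> hB hA [|a [|b [|? ?]]] // _.
transitivity ((\sum_(x <- rho a) eps x.2 *: x.1) * (\sum_(y <- rho b) eps y.2 *: y.1));
  last by rewrite !(rho_counit hA).
rewrite /Phi /sweed (@sum_prodseq_cons _ _ (rho a)) mulr_suml; apply: eq_bigr => x _.
rewrite (@sum_prodseq_cons _ _ (rho b)) mulr_sumr; apply: eq_bigr => y _.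
rewrite sum_prodseq_nil /omul /= !big_cons big_nil mulr1 (eps_mul hB).
by rewrite -scalerA scalerAr scalerAl.
Qed.

Lemma ecomp_extF {R : comPzRingType} {A : algType R} (F F' G : seq A -> A) i n l :
  (0 < i)%N -> (i.-1 + n <= size l)%N ->
  (forall x, size x = (size l - n).+1 -> F x = F' x) ->
  ecomp F G i n l = ecomp F' G i n l.
Proof. by move=> h1 h2 hF; rewrite /ecomp hF // size_ins. Qed.

Lemma ecomp_extG {R : comPzRingType} {A : algType R} (F G G' : seq A -> A) i n l :
  (i.-1 + n <= size l)%N ->
  (forall x, size x = n -> G x = G' x) ->
  ecomp F G i n l = ecomp F G' i n l.
Proof. by move=> h2 hG; rewrite /ecomp hG // size_blk. Qed.

Theorem lemma7p2 (R : comPzRingType) (H A : algType R)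
  (Delta : H -> seq (H * H)) (eps : H -> R) (rho : A -> seq (A * H)) :
  is_bialgebra Delta eps ->
  is_comodule_algebra Delta eps rho ->
  (  [/\ (* Phi is k-linear in each arity *)
   (forall (r : R) (f g : seq H -> R) (l : seq A),
      Phi rho (fun h => r * f h + g h) l = r *: Phi rho f l + Phi rho g l),
   (* Phi commutes with the partial compositions *)
   (forall (m n i : nat) (f g : seq H -> R), multilinR m f -> multilinR n g ->
      (0 < i <= m)%N -> forall l : seq A, size l = (m + n).-1 ->
      Phi rho (ocomp Delta f g i n) l = ecomp (Phi rho f) (Phi rho g) i n l),
   (* Phi preserves the identity, the multiplication and the unit e *)
   (forall a : A, Phi rho (oid eps) [:: a] = a),
   (forall a b : A, Phi rho (omul eps) [:: a; b] = a * b) &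
   (Phi rho (@oe R H) [::] = 1)] /\
   (* hence, on cochains, Phi commutes with d, cup product and bracket *)
   [/\ (forall (n : nat) (f : seq H -> R), multilinR n f ->
          forall l : seq A, size l = n.+1 ->
          Phi rho (odiff (ocomp Delta) (omul eps) n f) l
          = odiff (@ecomp R A) (@emul R A) n (Phi rho f) l),
       (forall (m n : nat) (f g : seq H -> R), multilinR m f -> multilinR n g ->
          forall l : seq A, size l = (m + n)%N ->
          Phi rho (ocup (ocomp Delta) (omul eps) m n f g) l
          = ocup (@ecomp R A) (@emul R A) m n (Phi rho f) (Phi rho g) l) &
       (forall (m n : nat) (f g : seq H -> R), multilinR m f -> multilinR n g ->
          forall l : seq A, size l = (m + n).-1 ->
          Phi rho (obracket (ocomp Delta) m n f g) l
          = obracket (@ecomp R A) m n (Phi rho f) (Phi rho g) l)]).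
Proof.
move=> hB hA.
have hmu := omul_ml hB.
have comp : forall (m n i : nat) (f g : seq H -> R), multilinR m f -> multilinR n g ->
      (0 < i <= m)%N -> forall l : seq A, size l = (m + n).-1 ->
      Phi rho (ocomp Delta f g i n) l = ecomp (Phi rho f) (Phi rho g) i n l.
  move=> m n i f g hf hg hi l hl.
  exact: (Phi_comp hA f g m n i hg hi (@ml_lin _ _ f m i.-1 hf) l hl).
have hPm := Phi_omul hB hA.
split; split.
- move=> r f g l; rewrite /Phi /sweed scaler_sumr -big_split.
  by apply: eq_bigr => c _; rewrite scalerDl scalerA.
- exact: comp.
- move=> a; rewrite /Phi /sweed (@sum_prodseq_cons _ _ (rho a)) -{2}(rho_counit hA a).
  apply: eq_bigr => x _; by rewrite sum_prodseq_nil /oid /= big_cons big_nil mulr1.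
- by move=> a b; rewrite hPm.
- by rewrite /Phi /sweed sum_prodseq_nil /oe big_nil scale1r.
- move=> n f hf l hl; rewrite /odiff; cbv beta.
  rewrite Phi_add Phi_add Phi_sum Phi_sgn; cbv beta.
  congr (_ + _ + _).
  + rewrite (comp 2 n 2 (omul eps) f hmu hf isT l ltac:(by rewrite hl)).
    apply: ecomp_extF => //; first by rewrite hl; lia.
    move=> x; rewrite hl => hx; apply: hPm; rewrite hx; lia.
  + apply: eq_big_nat => i /andP[i1 i2]; rewrite Phi_sgn; congr sgn.
    have hi : (0 < i <= n)%N by rewrite i1; lia.
    rewrite (comp n 2 i f (omul eps) hf hmu hi l ltac:(by rewrite hl; lia)).
    apply: ecomp_extG; first by rewrite hl; lia.
    exact: hPm.
  + congr sgn.
    rewrite (comp 2 n 1 (omul eps) f hmu hf isT l ltac:(by rewrite hl)).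
    apply: ecomp_extF => //; first by rewrite hl; lia.
    move=> x; rewrite hl => hx; apply: hPm; rewrite hx; lia.
- move=> m n f g hf hg l hl; rewrite /ocup.
  have hlin : forall pre post, size pre = m.+1.-1 ->
      (size pre + (size post).+1 = m.+1)%N ->
      forall r x y, ocomp Delta (omul eps) f 1 m (pre ++ (r *: x + y) :: post)
        = r * ocomp Delta (omul eps) f 1 m (pre ++ x :: post)
          + ocomp Delta (omul eps) f 1 m (pre ++ y :: post).
    move=> pre post hp hs.
    have -> : post = [::] by apply: size0nil; lia.
    have hp' : size pre = m by [].
    move=> r x y; rewrite /ocomp /ins /blk !take0 !drop0 !(take_size_cat _ hp').
    rewrite !add0n !(drop_size_cat _ hp') /omul /=.
    by rewrite mulrDr -scalerAr (eps_lin hB).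
  have hm1 : (0 < m.+1 <= m.+1)%N by rewrite leqnn.
  rewrite (Phi_comp hA (ocomp Delta (omul eps) f 1 m) g m.+1 n m.+1 hg hm1 hlin l
    ltac:(by rewrite hl addSn)).
  apply: ecomp_extF => //; first by rewrite hl; lia.
  move=> x; rewrite hl => hx.
  rewrite (comp 2 m 1 (omul eps) f hmu hf isT x ltac:(by rewrite hx; lia)).
  apply: ecomp_extF => //; first by rewrite hx; lia.
  move=> y; rewrite hx => hy; apply: hPm; rewrite hy; lia.
- move=> m n f g hf hg l hl; rewrite /obracket /opre; cbv beta.
  rewrite Phi_add Phi_opp !Phi_sgn !Phi_sum; cbv beta.
  congr (sgn _ _ - sgn _ (sgn _ _)); apply: eq_big_nat => i /andP[i1 i2];
    rewrite Phi_sgn; congr sgn.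
    have hi : (0 < i <= m)%N by rewrite i1; lia.
    by rewrite (comp m n i f g hf hg hi l hl).
  have hi : (0 < i <= n)%N by rewrite i1; lia.
  by rewrite (comp n m i g f hg hf hi l ltac:(by rewrite addnC)).
Qed.
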